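(* Let $k\geq 2$ be an integer and let $G$ be a properly edge-coloured graph on $n$ vertices. If $\hom(C_{2k},G)>64^{2k}k^{3k}n\Delta(G)^k$, then $G$ contains a rainbow cycle of length $2k$.
   Context: $\hom(C_{2k},G)$ is the number of graph homomorphisms from the cycle $C_{2k}$ to $G$, i.e. tuples $(x_1,\dots,x_{2k})$ of vertices with $x_ix_{i+1}\in E(G)$ for all $i$ (indices mod $2k$). $\Delta(G)$ is the maximum degree. An edge-colouring is proper if edges sharing a vertex get different colours; a subgraph is rainbow if all its edges have distinct colours. *)

(* Defs.v *)
From mathcomp Require Import all_boot.
Set Implicit Arguments. Unset Strict Implicit. Unset Printing Implicit Defensive.

Definition simple_graph (T : finType) (e : rel T) : Prop :=
  irreflexive e /\ symmetric e.

Definition max_degree (T : finType) (e : rel T) : nat :=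
  \max_(x : T) #|[set y | e x y]|.

Definition hom_cycle (T : finType) (e : rel T) (m : nat) : nat :=
  #|[set f : {ffun 'I_m -> T} | [forall i : 'I_m, e (f i) (f (ordS i))]]|.

Definition proper_edge_colouring (T : finType) (e : rel T) (C : Type)
    (c : T -> T -> C) : Prop :=
  (forall x y, e x y -> c x y = c y x) /\
  (forall x y z, e x y -> e x z -> y <> z -> c x y <> c x z).

Definition has_rainbow_cycle (T : finType) (e : rel T) (C : Type)
    (c : T -> T -> C) (m : nat) : Prop :=
  exists f : 'I_m -> T,
    injective f /\ (forall i : 'I_m, e (f i) (f (ordS i))) /\
    injective (fun i : 'I_m => c (f i) (f (ordS i))).

(* Main.v *)
Require Import Defs.
From mathcomp Require Import all_boot.
From mathcomp Require Import zify.
From Stdlib Require Import Classical ClassicalEpsilon.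
Set Implicit Arguments. Unset Strict Implicit. Unset Printing Implicit Defensive.

Lemma amgm x y : 2 * (x * y) <= x ^ 2 + y ^ 2.
Proof.
wlog h : x y / x <= y.
  move=> H; case: (leqP x y) => h; first exact: H.
  rewrite [x * y]mulnC addnC; apply: H; exact: ltnW.
rewrite -(subnKC h); move: (y - x) => d; nia.
Qed.

Lemma cs (I : finType) (a b : I -> nat) :
  (\sum_i a i * b i)^2 <= (\sum_i a i ^ 2) * (\sum_i b i ^ 2).
Proof.
rewrite -(@leq_pmul2l 2) //.
have -> : (\sum_i a i * b i)^2 = \sum_i \sum_j (a i * b j) * (a j * b i).
  rewrite -mulnn big_distrl /=; apply eq_bigr => i _; rewrite big_distrr /=.
  apply eq_bigr => j _; lia.
have -> : (\sum_i a i ^ 2) * (\sum_i b i ^ 2) = \sum_i \sum_j (a i * b j)^2.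
  rewrite big_distrl /=; apply eq_bigr => i _; rewrite big_distrr /=.
  apply eq_bigr => j _; lia.
apply: (@leq_trans (\sum_i \sum_j ((a i * b j)^2 + (a j * b i)^2))).
  rewrite big_distrr; apply leq_sum => i _; rewrite big_distrr; apply leq_sum => j _ /=; exact: amgm.
rewrite (eq_bigr _ (fun i _ => big_split _ _ _ _ _)) big_split /=.
rewrite [X in _ + X]exchange_big /=; lia.
Qed.


Section Seq.
Variables (s : nat -> nat) (K : nat).
Hypothesis pos : forall j, j <= K -> 0 < s j.
Hypothesis lc : forall j, j.+2 <= K -> s j.+1 ^ 2 <= s j * s j.+2.

Lemma ratio i j : i <= j -> j.+1 <= K -> s i.+1 * s j <= s i * s j.+1.
Proof.
elim: j => [|j IH] hij hK.
  by move: hij; rewrite leqn0 => /eqP ->; rewrite mulnC.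
case: (ltngtP i j.+1) => [hlt|hgt|->]; last by rewrite mulnC.
  2: by rewrite ltnNge hij in hgt.
have IH' := IH hlt (ltnW hK).
have L := lc hK.
have pj := pos (ltnW (ltnW hK)).
have pj1 := pos (ltnW hK).
rewrite -(@leq_pmul2r (s j * s j.+1)); last by rewrite muln_gt0 pj pj1.
have := leq_mul IH' L.
rewrite -mulnn; nia.
Qed.

Lemma balance a b : 1 <= a -> 1 <= b -> a + b = K -> s a * s b <= s 1 * s K.-1.
Proof.
wlog hab : a b / a <= b.
  move=> H ha hb hK; case: (leqP a b) => h; first exact: H.
  rewrite mulnC; apply: H => //; [exact: ltnW | by rewrite addnC].
elim: a b hab => [|a IH] b hab //.
case: a IH hab => [|a] IH hab _ hb hK.
  by rewrite -hK add1n.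
apply: leq_trans (_ : s a.+1 * s b.+1 <= _).
  apply: ratio => //; lia.
apply: IH => //; lia.
Qed.

Hypothesis s0 : s 0 = 1.

Lemma chain Q : 1 <= K -> s K < Q * s K.-1 -> s K.-1 <= Q ^ K.-1.
Proof.
move=> hK hQ.
have H : forall j, j <= K.-1 -> s j <= Q ^ j.
  elim=> [|j IH] hj; first by rewrite s0.
  have hr := @ratio j K.-1 (ltnW hj).
  rewrite prednK // in hr; have {}hr := hr (leqnn K).
  have pK := pos (leq_pred K).
  have : s j.+1 * s K.-1 < Q * s j * s K.-1.
    apply: leq_ltn_trans hr _.
    have pj : 0 < s j by apply: pos; lia.
    by rewrite [Q * s j]mulnC -mulnA ltn_pmul2l.
  rewrite ltn_pmul2r // => h1.
  rewrite expnS; apply: leq_trans (ltnW h1) _.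
  by rewrite leq_mul2l IH ?orbT // ltnW.
exact: H.
Qed.
End Seq.


Lemma sqr_le m n : m ^ 2 <= n ^ 2 -> m <= n.
Proof. by rewrite leq_exp2r. Qed.

Section Pointwise.
Variables (g : nat -> nat) (K D : nat).
Hypothesis g0 : g 0 = 1.
Hypothesis g1 : g 1 = 0.
Hypothesis F2 : forall p q, g (p + q) ^ 2 <= g (p + p) * g (q + q).
Hypothesis g2pos : 0 < g 2.
Hypothesis g2D : g 2 <= D.
Hypothesis K2 : 2 <= K.

Let s j := g (j + j).

Lemma s_lc j : j.+2 <= K -> s j.+1 ^ 2 <= s j * s j.+2.
Proof.
move=> _; rewrite /s.
have -> : j.+1 + j.+1 = j + j.+2 by lia.
exact: F2.
Qed.

Lemma s_pos j : 0 < s j.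
Proof.
have H : forall j, 0 < s j /\ 0 < s j.+1.
  elim=> [|i [IH1 IH2]]; first by rewrite /s g0.
  split => //.
  have := F2 i i.+2.
  have -> : i + i.+2 = i.+1 + i.+1 by lia.
  rewrite -/(s i.+1) -/(s i) -/(s i.+2) => h.
  have : 0 < s i * s i.+2 by apply: leq_trans h; rewrite expn_gt0 IH2.
  by rewrite muln_gt0 => /andP [].
by case: (H j).
Qed.

Let bal a b : 1 <= a -> 1 <= b -> a + b = K -> s a * s b <= s 1 * s K.-1.
Proof. exact: (balance (fun j _ => s_pos j) s_lc). Qed.

Lemma vy l : 0 < l < K + K -> g l * g (K + K - l) <= s 1 * s K.-1.
Proof.
move=> /andP [hl1 hl2].
rewrite -(odd_double_half l) in hl1 hl2 *.
move: (l./2) hl1 hl2 => a.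
case: (odd l) => /= hl1 hl2.
  case: a hl1 hl2 => [|a] hl1 hl2; first by rewrite g1.
  case: (ltnP a.+2 K) => hK; last first.
    have -> : K + K - (1 + a.+1.*2) = 1 by lia.
    by rewrite g1 muln0.
  pose b := K - a.+3; have hb : b = K - a.+3 by []; clearbody b.
  have h1 := F2 a.+1 a.+2.
  have h2 := F2 b.+1 b.+2.
  have -> : 1 + a.+1.*2 = a.+1 + a.+2 by lia.
  have -> : K + K - (a.+1 + a.+2) = b.+1 + b.+2 by lia.
  apply: sqr_le; rewrite !expnMn.
  apply: leq_trans (leq_mul h1 h2) _.
  rewrite -/(s a.+1) -/(s a.+2) -/(s b.+1) -/(s b.+2).
  have e1 : s a.+1 * s b.+2 <= s 1 * s K.-1 by apply: bal; lia.
  have e2 : s a.+2 * s b.+1 <= s 1 * s K.-1 by apply: bal; lia.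
  have := leq_mul e1 e2; rewrite -mulnn; lia.
rewrite add0n -addnn in hl1 hl2 *.
have -> : K + K - (a + a) = (K - a) + (K - a) by lia.
apply: bal; lia.
Qed.

Lemma vpoint M l : 0 < l < K + K ->
  M * (g l * g (K + K - l)) <= g (K + K) + (M * D) ^ K.
Proof.
move=> hl; have hy := vy hl.
have hs1 : s 1 <= D by [].
case: (leqP (M * D * s K.-1) (s K)) => h.
  apply: leq_trans (leq_addr _ _); rewrite -/(s K).
  apply: leq_trans h; rewrite -mulnA leq_mul2l; apply/orP; right.
  by apply: leq_trans hy _; rewrite leq_mul2r hs1 orbT.
have hc := chain (fun j _ => s_pos j) s_lc (g0 : s 0 = 1) (ltnW K2) h.
apply: leq_trans (leq_addl _ _).
apply: leq_trans (_ : M * (D * (M * D) ^ K.-1) <= _).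
  rewrite leq_mul2l; apply/orP; right; apply: leq_trans hy _.
  by apply: leq_mul.
by rewrite mulnA -expnS prednK // ltnW.
Qed.

Lemma cpoint N h : h ^ 2 <= K * D * s K.-1 * s K ->
  N * h <= g (K + K) + (K * N ^ 2 * D) ^ K.
Proof.
move=> hh; set Q := K * N ^ 2 * D.
case: (leqP (Q * s K.-1) (s K)) => h1.
  apply: leq_trans (leq_addr _ _); rewrite -/(s K).
  apply: sqr_le; rewrite expnMn.
  apply: leq_trans (_ : N ^ 2 * (K * D * s K.-1 * s K) <= _).
    by rewrite leq_mul2l hh orbT.
  have : Q * s K.-1 * s K <= s K * s K by rewrite leq_mul2r h1 orbT.
  rewrite /Q -mulnn; lia.
have hc := chain (fun j _ => s_pos j) s_lc (g0 : s 0 = 1) (ltnW K2) h1.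
apply: leq_trans (leq_addl _ _).
have hlt : (N * h) ^ 2 < (Q * s K.-1) ^ 2.
  have pK1 := s_pos K.-1.
  have Qp : 0 < Q by move: h1; case: (Q) => //; rewrite mul0n.
  have Np : 0 < N ^ 2 by move: Qp; rewrite /Q; case: (N) => //; rewrite !muln0 mul0n.
  have e1 : N ^ 2 * h ^ 2 <= N ^ 2 * (K * D * s K.-1 * s K) by rewrite leq_mul2l hh orbT.
  have e2 : K * D * s K.-1 * s K < K * D * s K.-1 * (Q * s K.-1).
    rewrite ltn_pmul2l // !muln_gt0 pK1 andbT; apply/andP; split; first lia.
    apply: leq_trans g2pos g2D.
  have e3 : N ^ 2 * (K * D * s K.-1 * s K) < N ^ 2 * (K * D * s K.-1 * (Q * s K.-1)).
    by rewrite ltn_pmul2l.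
  have e4 : N ^ 2 * (K * D * s K.-1 * (Q * s K.-1)) = (Q * s K.-1) ^ 2.
    rewrite /Q -!mulnn; lia.
  rewrite expnMn -e4; exact: leq_ltn_trans e1 e3.
rewrite ltn_exp2r // in hlt.
apply: leq_trans (ltnW hlt) _.
rewrite -{2}(prednK (ltnW K2)) expnS leq_mul2l hc orbT //.
Qed.
End Pointwise.


Section Walks.
Variables (T : finType) (e : rel T).
Hypothesis esym : symmetric e.
Hypothesis eirr : irreflexive e.

Fixpoint W m x y : nat :=
  if m is m'.+1 then \sum_z e x z * W m' z y else (x == y : nat).

Lemma W0 x y : W 0 x y = (x == y). Proof. by []. Qed.
Lemma WS m x y : W m.+1 x y = \sum_z e x z * W m z y. Proof. by []. Qed.

Lemma sum_pred1 (F : T -> nat) x : \sum_z (x == z) * F z = F x.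
Proof.
rewrite (bigD1 x) //= eqxx mul1n big1 ?addn0 // => z hz.
by rewrite eq_sym (negbTE hz).
Qed.

Lemma W_add p q x y : W (p + q) x y = \sum_z W p x z * W q z y.
Proof.
elim: p x => [|p IH] x; first by rewrite add0n sum_pred1.
rewrite addSn WS.
under eq_bigr => z _ do rewrite IH big_distrr /=.
rewrite exchange_big /=; apply: eq_bigr => w _.
rewrite big_distrl /=; apply: eq_bigr => z _; by rewrite mulnA.
Qed.

Lemma W1 x y : W 1 x y = e x y.
Proof. rewrite WS; under eq_bigr => z _ do rewrite W0 mulnC eq_sym; exact: (sum_pred1 (e x)). Qed.

Lemma W_sym m x y : W m x y = W m y x.
Proof.
elim: m x y => [|m IH] x y; first by rewrite !W0 eq_sym.
rewrite WS -addn1 W_add; apply: eq_bigr => z _.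
by rewrite IH W1 mulnC esym.
Qed.

Lemma sum_tupleS m (F : seq T -> nat) :
  \sum_(t : m.+1.-tuple T) F t = \sum_x \sum_(t : m.-tuple T) F (x :: t).
Proof.
rewrite pair_big /=.
rewrite (reindex (fun p : T * m.-tuple T => [tuple of p.1 :: p.2])) /=; last first.
  exists (fun t : m.+1.-tuple T => (thead t, [tuple of behead t])).
    by move=> [x t] _ /=; congr pair; apply: val_inj.
  by move=> t _; rewrite [t in RHS]tuple_eta.
by apply: eq_bigr => [[x t]].
Qed.

Lemma sum_tuple0 (F : seq T -> nat) : \sum_(t : 0.-tuple T) F t = F [::].
Proof.
rewrite (eq_bigr (fun _ => F [::])); last by move=> t _; rewrite (tuple0 t).
by rewrite sum_nat_const card_tuple expn0 mul1n.
Qed.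

Lemma sum_tuple_cat p q (F : seq T -> nat) :
  \sum_(t : (p + q).-tuple T) F t =
  \sum_(u : p.-tuple T) \sum_(v : q.-tuple T) F (u ++ v).
Proof.
elim: p F => [|p IH] F; first by rewrite (sum_tuple0 (fun u => \sum_(v : q.-tuple T) F (u ++ v))).
apply: etrans (sum_tupleS (p + q) F) _; rewrite (sum_tupleS p (fun u => \sum_(v : q.-tuple T) F (u ++ v))); apply: eq_bigr => x _.
exact: (IH (fun s => F (x :: s))).
Qed.

Lemma sum_tuple_cat' p q m (F : seq T -> nat) : p + q = m ->
  \sum_(t : m.-tuple T) F t =
  \sum_(u : p.-tuple T) \sum_(v : q.-tuple T) F (u ++ v).
Proof. by move=> <-; exact: sum_tuple_cat. Qed.

Lemma sum_tuple_rot m r (F : seq T -> nat) :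
  \sum_(t : m.-tuple T) F (rot r t) = \sum_(t : m.-tuple T) F t.
Proof.
rewrite (reindex (fun t : m.-tuple T => [tuple of rotr r t])) /=; last first.
  exists (fun t : m.-tuple T => [tuple of rot r t]).
    by move=> t _; apply: val_inj; rewrite /= rotrK.
  by move=> t _; apply: val_inj; rewrite /= rotK.
by apply: eq_bigr => t _; rewrite rotrK.
Qed.

Lemma W_tuple m x y :
  \sum_(t : m.-tuple T) (path e x t && (last x t == y)) = W m x y.
Proof.
elim: m x => [|m IH] x; first by rewrite (sum_tuple0 (fun t => path e x t && (last x t == y))).
rewrite (sum_tupleS m (fun t => path e x t && (last x t == y))) WS; apply: eq_bigr => z _.
rewrite -IH big_distrr /=; apply: eq_bigr => t _.
by rewrite /= -andbA mulnb.
Qed.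

End Walks.


Section Graph.
Variables (T : finType) (e : rel T) (C : Type) (c : T -> T -> C).
Hypothesis esym : symmetric e.
Hypothesis eirr : irreflexive e.
Hypothesis csym : forall x y, e x y -> c x y = c y x.
Hypothesis cprop : forall x y z, e x y -> e x z -> y <> z -> c x y <> c x z.

Definition samec (a b : C) : bool :=
  if excluded_middle_informative (a = b) then true else false.
Lemma samecP a b : reflect (a = b) (samec a b).
Proof. rewrite /samec; case: excluded_middle_informative => h; by constructor. Qed.

Definition deg x := \sum_y (e x y : nat).
Definition Dm := \max_(x : T) #|[set y | e x y]|.

Lemma deg_le x : deg x <= Dm.
Proof.
have -> : deg x = #|[set y | e x y]|.
  rewrite cardsE -sum1_card big_mkcond /=; apply: eq_bigr => y _.
  by rewrite /= unfold_in /=; case: (e x y).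
exact: (@leq_bigmax T (fun x => #|[set y | e x y]|) x).
Qed.

Local Notation W := (W e).

Lemma W2 x : W 2 x x = deg x.
Proof.
rewrite WS; apply: eq_bigr => y _; rewrite W1 esym.
by case: (e y x).
Qed.

Lemma W_deg0 m x y : deg x = 0 -> W m.+1 x y = 0.
Proof.
move=> h; rewrite WS big1 // => z _.
have : (e x z : nat) <= deg x by rewrite /deg (bigD1 z) //= leq_addr.
by rewrite h; case: (e x z).
Qed.

Lemma F2 x p q : W (p + q) x x ^ 2 <= W (p + p) x x * W (q + q) x x.
Proof.
rewrite !W_add.
have -> : \sum_z W p x z * W p z x = \sum_z W p x z ^ 2.
  by apply: eq_bigr => z _; rewrite (W_sym esym p z x) mulnn.
have -> : \sum_z W q x z * W q z x = \sum_z W q z x ^ 2.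
  by apply: eq_bigr => z _; rewrite (W_sym esym q x z) mulnn.
exact: cs.
Qed.

Definition hascol K (g : C) (a : T) (v : seq T) : bool :=
  [exists d : 'I_K, samec (c (nth a (a :: v) d) (nth a v d)) g].
Definition Gc K a' a z := \sum_(v : K.-tuple T) [&& path e a v, last a v == z & hascol K (c a' a) a v].
Definition hz K z := \sum_a \sum_a' e a' a * W K.-1 z a' * Gc K a' a z.

Lemma Gc_le K a' a z : Gc K a' a z <= W K a z.
Proof.
rewrite -W_tuple; apply: leq_sum => v _.
by case: (path e a v); case: (last a v == z); case: hascol.
Qed.

Lemma one_col a g : \sum_a' (e a' a && samec g (c a' a) : nat) <= 1.
Proof.
case: (pickP (fun a' => e a' a && samec g (c a' a))) => [a1 Pa1 | none]; last first.
  by rewrite big1 // => a' _; rewrite none.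
rewrite (bigD1 a1) //= Pa1 big1 // => a2 ne.
case E: (e a2 a && samec g (c a2 a)) => //; exfalso.
move/andP: E => [e2 /samecP s2].
move/andP: Pa1 => [e1 /samecP s1].
apply: (cprop (x:=a) (y:=a1) (z:=a2)); rewrite 1?esym //.
  by move=> h; rewrite h eqxx in ne.
by rewrite -(csym e1) -s1 s2 (csym e2).
Qed.

Lemma ex_le_sum (I : finType) (P : pred I) : ([exists i, P i] : nat) <= \sum_i (P i : nat).
Proof.
case: (boolP [exists i, P i]) => // /existsP [i Pi].
by rewrite (bigD1 i) //= Pi.
Qed.

Lemma has_sum K v a :
  \sum_a' e a' a * hascol K (c a' a) a v <= K.
Proof.
apply: leq_trans (_ : \sum_a' \sum_(d : 'I_K) (e a' a && samec (c (nth a (a :: v) d) (nth a v d)) (c a' a) : nat) <= _).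
  apply: leq_sum => a' _; case: (e a' a); rewrite ?mul0n // mul1n.
  apply: leq_trans (ex_le_sum _) _; apply: leq_sum => d _; by [].
rewrite exchange_big /=.
apply: leq_trans (_ : \sum_(d : 'I_K) 1 <= _); last by rewrite sum1_card card_ord.
by apply: leq_sum => d _; apply: one_col.
Qed.

Lemma Gc_sum K a z : \sum_a' e a' a * Gc K a' a z <= K * W K a z.
Proof.
rewrite -W_tuple big_distrr /=.
under eq_bigr => a' _ do rewrite /Gc big_distrr /=.
rewrite exchange_big /=; apply: leq_sum => v _.
case: (path e a v); case: (last a v == z) => /=; last 3 first.
- by rewrite big1 // => a' _; rewrite muln0.
- by rewrite big1 // => a' _; rewrite muln0.
- by rewrite big1 // => a' _; rewrite muln0.
rewrite muln1.
exact: has_sum.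
Qed.

Lemma hz_sq K z : hz K z ^ 2 <= K * Dm * W (K.-1 + K.-1) z z * W (K + K) z z.
Proof.
rewrite /hz pair_bigA /=.
have -> : \sum_(p : T * T) e p.2 p.1 * W K.-1 z p.2 * Gc K p.2 p.1 z =
   \sum_(p : T * T) (e p.2 p.1 * W K.-1 z p.2) * (e p.2 p.1 * Gc K p.2 p.1 z).
  by apply: eq_bigr => p _; case: (e p.2 p.1); rewrite ?mul0n ?mul1n.
apply: leq_trans (cs _ _) _.
have h1 : \sum_(p : T * T) (e p.2 p.1 * W K.-1 z p.2) ^ 2 <= Dm * W (K.-1 + K.-1) z z.
  rewrite -(pair_bigA _ (fun a a' => (e a' a * W K.-1 z a') ^ 2)) /=.
  rewrite exchange_big W_add big_distrr /=; apply: leq_sum => a' _.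
  rewrite (W_sym esym _ a' z) mulnn.
  apply: leq_trans (_ : \sum_a (e a' a : nat) * W K.-1 z a' ^ 2 <= _).
    by apply: leq_sum => a _; rewrite expnMn; case: (e a' a).
  by rewrite -big_distrl /= leq_mul2r -/(deg a') deg_le orbT.
have h2 : \sum_(p : T * T) (e p.2 p.1 * Gc K p.2 p.1 z) ^ 2 <= K * W (K + K) z z.
  rewrite -(pair_bigA _ (fun a a' => (e a' a * Gc K a' a z) ^ 2)) /=.
  rewrite W_add big_distrr /=; apply: leq_sum => a _.
  rewrite (W_sym esym _ z a).
  apply: leq_trans (_ : \sum_a' W K a z * (e a' a * Gc K a' a z) <= _).
    apply: leq_sum => a' _; rewrite -mulnn leq_mul2r; apply/orP; right.
    by case: (e a' a); rewrite ?mul0n ?mul1n // Gc_le.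
  rewrite -big_distrr /= mulnCA leq_mul2l; apply/orP; right.
  exact: Gc_sum.
apply: leq_trans (leq_mul h1 h2) _.
by apply: eq_leq; lia.
Qed.
End Graph.


Section Cyc.
Variables (T : finType) (e : rel T).
Hypothesis esy : symmetric e.

Lemma cycle_tnth m (t : m.-tuple T) :
  cycle e t = [forall i : 'I_m, e (tnth t i) (tnth t (ordS i))].
Proof.
case: m t => [|m] t.
  rewrite (tuple0 t) /=; apply/esym/forallP => -[i hi]; by [].
have x0 : T := tnth t ord0.
have Hs : size t = m.+1 by rewrite size_tuple.
rewrite (cycle_path x0); apply/(pathP x0)/forallP => [H i|H j hj].
  rewrite !(tnth_nth x0) /=.
  case: (ltnP i.+1 m.+1) => hi.
    rewrite modn_small //.
    have := H i.+1; rewrite Hs => /(_ hi) /=; exact.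
  have hi' : i = m :> nat by move: (ltn_ord i) hi; lia.
  rewrite hi' modnn.
  have := H 0; rewrite Hs => /(_ isT) /=.
  by rewrite -(nth_last x0) Hs.
case: j hj => [|j] hj /=.
  have := H ord_max; rewrite !(tnth_nth x0) /= modnn.
  by rewrite -(nth_last x0) Hs.
rewrite Hs in hj.
have := H (Ordinal (ltnW hj)); rewrite !(tnth_nth x0) /= modn_small //.
Qed.

Lemma hom_tuple m : hom_cycle e m = \sum_(t : m.-tuple T) cycle e t.
Proof.
rewrite /hom_cycle -sum1_card big_mkcond.
rewrite (reindex (fun t : m.-tuple T => [ffun i => tnth t i])); last first.
  exists (fun f : {ffun 'I_m -> T} => [tuple f i | i < m]).
    by move=> t _; apply: eq_from_tnth => i; rewrite tnth_mktuple ffunE.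
  by move=> f _; apply/ffunP => i; rewrite ffunE tnth_mktuple.
apply: eq_bigr => t _; rewrite inE cycle_tnth.
have -> : [forall i, e ([ffun i => tnth t i] i) ([ffun i => tnth t i] (ordS i))] =
  [forall i, e (tnth t i) (tnth t (ordS i))] by apply: eq_forallb => i; rewrite !ffunE.
by case: [forall _, _].
Qed.

Lemma cyc_W m : 0 < m -> \sum_(t : m.-tuple T) (cycle e t : nat) = \sum_x W e m x x.
Proof.
move=> hm.
under [RHS]eq_bigr => x _ do rewrite -W_tuple.
rewrite exchange_big /=; apply: eq_bigr => t _.
case: t => -[|y s] hs; first by move: hs; rewrite /= => /eqP hs; rewrite -hs in hm.
have -> : cycle e (Tuple hs) = path e (last y s) (y :: s) by change (cycle e (y :: s) = path e (last y s) (y :: s)); rewrite (cycle_path y).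
rewrite (bigD1 (last y s)) //= eqxx andbT big1 ?addn0 // => x hx.
by rewrite eq_sym (negbTE hx) andbF.
Qed.
End Cyc.


Section Count.
Variables (T : finType) (e : rel T) (C : Type) (c : T -> T -> C) (x0 : T).
Hypothesis esy : symmetric e.

Lemma last_nonempty (u : seq T) x y : 0 < size u -> last x u = last y u.
Proof. by case: u. Qed.

Lemma vcount m l : 0 < l < m ->
  \sum_(t : m.-tuple T) cycle e t * (nth x0 t l.-1 == last x0 t) <=
  \sum_x W e l x x * W e (m - l) x x.
Proof.
move=> /andP [hl hlm].
rewrite (@sum_tuple_cat' _ l (m - l) m (fun s => cycle e s * (nth x0 s l.-1 == last x0 s)));
  last by lia.
apply: leq_trans (_ : _ <= \sum_(u : l.-tuple T) \sum_(v : (m - l).-tuple T) \sum_x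
   (path e x u && (last x u == x)) * (path e x v && (last x v == x))) _; last first.
  apply: eq_leq.
  rewrite pair_bigA /= exchange_big /=; apply: eq_bigr => x _.
  rewrite -(pair_bigA _ (fun (u : l.-tuple T) (v : (m - l).-tuple T) =>
     (path e x u && (last x u == x)) * (path e x v && (last x v == x)))) /=.
  rewrite -!W_tuple big_distrl /=; apply: eq_bigr => u _; by rewrite big_distrr.
apply: leq_sum => u _; apply: leq_sum => v _.
set x := last x0 (u ++ v).
rewrite (bigD1 x) //= (leq_trans _ (leq_addr _ _)) //.
have su : size u = l by rewrite size_tuple.
have hu : 0 < size u by rewrite su.
have hlt : l.-1 < l by rewrite prednK.
rewrite nth_cat su hlt.
have -> : nth x0 u l.-1 = last x0 u by rewrite -(nth_last x0) su.
case E: (last x0 u == x); last by rewrite muln0.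
rewrite muln1 (cycle_path x0) -/x cat_path.
move/eqP: E => E.
have Lu : last x u = x by rewrite (last_nonempty x x0 hu).
rewrite Lu eqxx andbT.
have Lv : last x v = x by rewrite [in RHS]/x last_cat E.
rewrite Lv eqxx andbT.
by case: (path e x u); case: (path e x v).
Qed.

Lemma sum_swap2 (I J K L : finType) (F : I -> J -> K -> L -> nat) :
  \sum_i \sum_j \sum_k \sum_l F i j k l = \sum_k \sum_l \sum_i \sum_j F i j k l.
Proof.
rewrite (eq_bigr (fun i => \sum_k \sum_j \sum_l F i j k l)); last by move=> i _; exact: exchange_big.
rewrite exchange_big /=; apply: eq_bigr => k _.
rewrite (eq_bigr (fun i => \sum_l \sum_j F i j k l)); last by move=> i _; exact: exchange_big.
exact: exchange_big.
Qed.

Definition CB K (s : seq T) : bool :=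
  [exists d : 'I_K, samec (c (nth x0 s (K.-1 + d)) (nth x0 s (K + d)))
                          (c (nth x0 s K.-2) (nth x0 s K.-1))].

Lemma ccount K : 2 <= K ->
  \sum_(t : (K + K).-tuple T) cycle e t * CB K t <= \sum_z hz e c K z.
Proof.
move=> K2.
rewrite (@sum_tuple_cat' _ K.-1 K.+1 (K + K) (fun s => cycle e s * CB K s)); last by lia.
rewrite (eq_bigr (fun u : K.-1.-tuple T => \sum_a \sum_(v : K.-tuple T)
   cycle e (u ++ a :: v) * CB K (u ++ a :: v))); last first.
  by move=> u _; rewrite (sum_tupleS K (fun w => cycle e (u ++ w) * CB K (u ++ w))).
pose H (u : K.-1.-tuple T) (v : K.-tuple T) (z a' a : T) :=
  e a' a * (path e z u && (last z u == a')) *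
  [&& path e a v, last a v == z & hascol c K (c a' a) a v].
apply: leq_trans (_ : _ <= \sum_a \sum_z \sum_a' \sum_u \sum_v H u v z a' a) _.
  rewrite exchange_big /=; apply: leq_sum => a _.
  rewrite -(sum_swap2 (fun u v z a' => H u v z a' a)).
  apply: leq_sum => u _; apply: leq_sum => v _.
  have su : size u = K.-1 by rewrite size_tuple.
  have sv : size v = K by rewrite size_tuple.
  have hu : 0 < size u by rewrite su; lia.
  set z := last a v; set a' := last x0 u.
  apply: leq_trans (_ : H u v z a' a <= _); last first.
    by rewrite (bigD1 z) //= (bigD1 a') //= -addnA leq_addr.
  rewrite /H.
  rewrite (cycle_path x0) last_cat /= -/z cat_path /=.
  have Lz : last z u = a' by rewrite /a' (last_nonempty z x0 hu).
  rewrite Lz eqxx andbT.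
  have -> : CB K (u ++ a :: v) = hascol c K (c a' a) a v.
    rewrite /CB /hascol; apply: eq_existsb => d.
    rewrite !nth_cat su.
    have -> : (K.-1 + d < K.-1) = false by lia.
    have -> : (K + d < K.-1) = false by lia.
    have -> : (K.-2 < K.-1) = true by lia.
    have -> : (K.-1 < K.-1) = false by lia.
    have -> : K.-1 + d - K.-1 = d by lia.
    have -> : K + d - K.-1 = d.+1 by lia.
    rewrite subnn /=.
    have -> : nth x0 u K.-2 = a' by rewrite /a' -(nth_last x0) su; congr nth; lia.
    have hd : d < size v by rewrite sv.
    have hd' : d < size (a :: v) by rewrite /= sv ltnS ltnW.
    by rewrite (set_nth_default a x0 hd) (set_nth_default a x0 hd').
  rewrite eqxx /=.
  by case: (path e z u); case: (e a' a); case: (path e a v); case: hascol.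
rewrite exchange_big /=; apply: eq_leq; apply: eq_bigr => z _.
rewrite /hz; apply: eq_bigr => a _; apply: eq_bigr => a' _.
rewrite /Gc -W_tuple (big_distrr (e a' a : nat)) big_distrl /=; apply: eq_bigr => u _.
rewrite big_distrr /=; apply: eq_bigr => v _.
by [].
Qed.
End Count.


Section Union.
Variables (T : finType) (e : rel T) (C : Type) (c : T -> T -> C) (x0 : T).

Lemma nth_rot (s : seq T) r p : r <= size s -> p < size s ->
  nth x0 (rot r s) p = nth x0 s (if p + r < size s then p + r else p + r - size s).
Proof.
move=> hr hp; rewrite /rot nth_cat size_drop.
case: ltnP => h1.
  rewrite nth_drop; case: ltnP => h2; [congr nth; lia | lia].
rewrite nth_take; last by lia.
case: ltnP => h2; [lia | congr nth; lia].
Qed.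

Lemma ordS_val m (i : 'I_m) : val (ordS i) = if i.+1 < m then i.+1 else 0.
Proof.
rewrite /=; case: ltnP => h; first by rewrite modn_small.
have -> : i.+1 = m by move: (ltn_ord i) h; lia.
by rewrite modnn.
Qed.

Variable K : nat.
Hypothesis K2 : 2 <= K.
Local Notation m := (K + K).

Definition VB l (s : seq T) : bool := nth x0 s l.-1 == last x0 s.

Lemma vwitness (t : m.-tuple T) (i j : 'I_m) : i < j -> tnth t i = tnth t j ->
  exists r : 'I_m, exists l : 'I_m, (0 < l) && VB l (rot r t).
Proof.
move=> hij; rewrite !(tnth_nth x0) => E.
have st : size t = m by rewrite size_tuple.
have hj := ltn_ord j.
case: (ltnP j.+1 m) => hjm.
  exists (Ordinal hjm).
  have hl : m - j + i < m by lia.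
  exists (Ordinal hl) => /=.
  apply/andP; split; first lia.
  rewrite /VB -(nth_last x0) size_rot st.
  rewrite !nth_rot ?st; try lia.
  case: ltnP => h1; first lia.
  case: ltnP => h2; first lia.
  have -> : (m - j + i).-1 + j.+1 - m = i by lia.
  have -> : m.-1 + j.+1 - m = j by lia.
  by rewrite E.
have h0 : 0 < m by lia.
exists (Ordinal h0).
have hl : i.+1 < m by lia.
exists (Ordinal hl) => /=.
rewrite /VB rot0 -(nth_last x0) st /=.
have -> : m.-1 = j by lia.
by rewrite E.
Qed.

Lemma cwitness (t : m.-tuple T) (i j : 'I_m) :
  (j > i /\ j - i <= K) \/ (j < i /\ j + m - i <= K) ->
  c (tnth t i) (tnth t (ordS i)) = c (tnth t j) (tnth t (ordS j)) ->
  exists r : 'I_m, CB c x0 K (rot r t).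
Proof.
move=> hd; rewrite !(tnth_nth x0) !ordS_val => E.
have st : size t = m by rewrite size_tuple.
have hi := ltn_ord i; have hj := ltn_ord j.
set qi := (if i.+1 < m then i.+1 else 0) in E.
have Hqi : (qi = i.+1 \/ (qi = 0 /\ i.+1 = m)) /\ qi < m by rewrite /qi; case: ltnP; lia.
set qj := (if j.+1 < m then j.+1 else 0) in E.
have Hqj : (qj = j.+1 \/ (qj = 0 /\ j.+1 = m)) /\ qj < m by rewrite /qj; case: ltnP; lia.
clearbody qi qj.
have [r [hr Hr]] : exists r, r < m /\ (K.-2 + r = i \/ K.-2 + r = i + m).
  case: (leqP K.-2 i) => h; [exists (i - K.-2) | exists (i + m - K.-2)]; lia.
exists (Ordinal hr).
have [d [hdK Hd]] : exists d, d < K /\ (i + d.+1 = j \/ i + d.+1 = j + m).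
  case: hd => -[h1 h2]; [exists (j - i).-1 | exists (j + m - i).-1]; lia.
apply/existsP; exists (Ordinal hdK); apply/samecP => /=.
have P1 : forall p q, p < m + m -> (p = q \/ p = q + m) -> q < m ->
   nth x0 t (if p < m then p else p - m) = nth x0 t q.
  move=> p q h1 h2 h3; case: ltnP => h4; congr nth; lia.
rewrite !nth_rot ?st; try lia.
rewrite (P1 _ j); try lia.
rewrite (P1 _ qj); try lia.
rewrite (P1 _ i); try lia.
rewrite (P1 _ qi); try lia.
by rewrite E.
Qed.
End Union.


Lemma cancel_l a b c' : 0 < a -> a * b <= a * c' -> b <= c'.
Proof. by move=> ha; rewrite leq_pmul2l. Qed.

Theorem lemma4p1 (k : nat) (T : finType) (e : rel T) (C : Type)
    (c : T -> T -> C) :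
  2 <= k -> simple_graph e -> proper_edge_colouring e c ->
  hom_cycle e (2 * k) > 64 ^ (2 * k) * k ^ (3 * k) * #|T| * max_degree e ^ k ->
  has_rainbow_cycle e c (2 * k).
Proof.
move=> k2 [eirr esy] [csym cprop].
have -> : 2 * k = k + k by rewrite mul2n addnn.
move=> hyp; apply: NNPP => norb.
have mpos : 0 < k + k by lia.
have [x0 _] : exists x0 : T, true.
  have : 0 < \sum_(t : (k + k).-tuple T) cycle e t.
    by rewrite -hom_tuple; apply: leq_ltn_trans hyp.
  rewrite lt0n sum_nat_eq0 negb_forall => /existsP [t _].
  by exists (tnth t (Ordinal mpos)).
set T0 := hom_cycle e (k + k).
set D := max_degree e.
set n := #|T|.
have T0W : T0 = \sum_x W e (k + k) x x by rewrite /T0 hom_tuple cyc_W.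
pose VV (t : seq T) := \sum_(r : 'I_(k + k)) \sum_(l : 'I_(k + k) | 0 < l) (VB x0 l (rot r t) : nat).
pose CC (t : seq T) := \sum_(r : 'I_(k + k)) (CB c x0 k (rot r t) : nat).
have U : forall t : (k + k).-tuple T, cycle e t -> 1 <= VV t + CC t.
  move=> t ct.
  pose f := fun i : 'I_(k + k) => tnth t i.
  have adj : forall i, e (f i) (f (ordS i)).
    by move: ct; rewrite cycle_tnth => /forallP.
  have : ~ (injective f /\ injective (fun i => c (f i) (f (ordS i)))).
    by move=> [h1 h2]; apply: norb; exists f.
  move=> nboth.
  case: (classic (injective f)) => [finj | ninj].
    have [i [j [E hne]]] : exists i j, c (f i) (f (ordS i)) = c (f j) (f (ordS j)) /\ i <> j.
      apply: NNPP => H; apply: nboth; split => // i j Hij.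
      apply: NNPP => hne; apply: H; by exists i, j.
    have hii := ltn_ord i; have hjj := ltn_ord j.
    have hne' : (i : nat) <> j by move=> h; apply: hne; apply: val_inj.
    have [r hr] : exists r : 'I_(k + k), CB c x0 k (rot r t).
      case: (ltnP k ((if i < j then j - i else j + (k + k) - i))) => hd.
        apply: (@cwitness T C c x0 k k2 t j i); last by rewrite -E.
        move: hd; case: (ltnP i j) => h hd; lia.
      apply: (@cwitness T C c x0 k k2 t i j) => //.
      move: hd; case: (ltnP i j) => h hd; lia.
    apply: leq_trans (leq_addl _ _).
    by rewrite /CC (bigD1 r) //= hr.
  have [i [j [E hne]]] : exists i j, f i = f j /\ i <> j.
    apply: NNPP => H; apply: ninj => i j Hij.
    apply: NNPP => hne; apply: H; by exists i, j.
  have hne' : (i : nat) <> j by move=> h; apply: hne; apply: val_inj.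
  have [r [l /andP [hl hv]]] : exists r l : 'I_(k + k), (0 < l) && VB x0 l (rot r t).
    case: (ltnP i j) => h; first exact: (@vwitness T x0 k k2 t i j).
    apply: (@vwitness T x0 k k2 t j i); [lia | by rewrite /f in E].
  apply: leq_trans (leq_addr _ _).
  rewrite /VV (bigD1 r) //= (bigD1 l) //= hv.
  by rewrite -addnA leq_addr.

have g0 : forall x, W e 0 x x = 1 by move=> x; rewrite W0 eqxx.
have g1 : forall x, W e 1 x x = 0 by move=> x; rewrite W1 eirr.
have gF2 : forall x p q, W e (p + q) x x ^ 2 <= W e (p + p) x x * W e (q + q) x x.
  by move=> x p q; apply: F2.
have g2D : forall x, W e 2 x x <= D by move=> x; rewrite W2 //; apply: deg_le.
set M := 16 * k ^ 2.
set N := 8 * k.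
set X := (M * D) ^ k.
set Y := (k * N ^ 2 * D) ^ k.
have T0le : T0 <= \sum_(t : (k + k).-tuple T) cycle e t * (VV t + CC t).
  rewrite /T0 hom_tuple; apply: leq_sum => t _.
  case ct: (cycle e t) => //=; rewrite mul1n; exact: U.
have VVeq : \sum_(t : (k + k).-tuple T) cycle e t * VV t =
   (k + k) * \sum_(l : 'I_(k + k) | 0 < l) \sum_(t : (k + k).-tuple T) cycle e t * VB x0 l t.
  rewrite (eq_bigr (fun t : (k + k).-tuple T => \sum_(r : 'I_(k + k)) \sum_(l : 'I_(k + k) | 0 < l)
       cycle e t * VB x0 l (rot r t))); last first.
    by move=> t _; rewrite /VV big_distrr; apply: eq_bigr => r _; rewrite big_distrr.
  rewrite exchange_big /=.
  rewrite (eq_bigr (fun r => \sum_(l : 'I_(k + k) | 0 < l) \sum_(t : (k + k).-tuple T)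
       cycle e t * VB x0 l t)); last first.
    move=> r _; rewrite exchange_big /=; apply: eq_bigr => l _.
    rewrite -(sum_tuple_rot (k + k) r (fun s => cycle e s * VB x0 l s)).
    by apply: eq_bigr => t _; rewrite rot_cycle.
  by rewrite sum_nat_const card_ord.
have CCeq : \sum_(t : (k + k).-tuple T) cycle e t * CC t =
   (k + k) * \sum_(t : (k + k).-tuple T) cycle e t * CB c x0 k t.
  rewrite (eq_bigr (fun t : (k + k).-tuple T => \sum_(r : 'I_(k + k)) cycle e t * CB c x0 k (rot r t))); last first.
    by move=> t _; rewrite /CC big_distrr.
  rewrite exchange_big /=.
  rewrite (eq_bigr (fun r => \sum_(t : (k + k).-tuple T) cycle e t * CB c x0 k t)); last first.
    move=> r _.
    rewrite -(sum_tuple_rot (k + k) r (fun s => cycle e s * CB c x0 k s)).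
    by apply: eq_bigr => t _; rewrite rot_cycle.
  by rewrite sum_nat_const card_ord.
set V := \sum_(l : 'I_(k + k) | 0 < l) \sum_x W e l x x * W e (k + k - l) x x.
set Cc := \sum_z hz e c k z.
have h3 : T0 <= (k + k) * V + (k + k) * Cc.
  apply: leq_trans T0le _.
  under eq_bigr => t _ do rewrite mulnDr.
  rewrite big_split /= VVeq CCeq; apply: leq_add; rewrite leq_mul2l; apply/orP; right.
    apply: leq_sum => l hl; apply: vcount; rewrite hl ltn_ord.
  done.
  exact: (ccount e c x0 k2).
have h1 : M * V <= (k + k) * (T0 + n * X).
  rewrite /V big_distrr /=.
  apply: leq_trans (_ : \sum_(l : 'I_(k + k) | 0 < l) (T0 + n * X) <= _); last first.
    apply: leq_trans (_ : \sum_(l : 'I_(k + k)) (T0 + n * X) <= _).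
      by rewrite big_mkcond /=; apply: leq_sum => l _; case: ifP.
    by rewrite sum_nat_const card_ord.
  apply: leq_sum => l hl.
  rewrite big_distrr /= T0W /n -sum_nat_const -big_split /=.
  apply: leq_sum => x _.
  case: (posnP (deg e x)) => hdeg.
    rewrite -(prednK hl) W_deg0 // mul0n muln0; exact: leq0n.
  apply: (@vpoint (fun l => W e l x x) k D (g0 x) (g1 x) (gF2 x) _ (g2D x) k2 M l).
    by rewrite W2.
  by rewrite hl ltn_ord.
have h2 : N * Cc <= T0 + n * Y.
  rewrite /Cc big_distrr /= T0W /n -sum_nat_const -big_split /=.
  apply: leq_sum => z _.
  case: (posnP (deg e z)) => hdeg.
    have Wz : forall a', W e k.-1 z a' = 0.
      by move=> a'; case: (k) k2 => [|[|k']] // _; exact: W_deg0.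
    rewrite /hz big1 ?muln0 // => a _; rewrite big1 // => a' _.
    by rewrite Wz muln0 mul0n.
  apply: (@cpoint (fun l => W e l z z) k D (g0 z) (g1 z) (gF2 z) _ (g2D z) k2 N).
    by rewrite W2.
  exact: hz_sq.
have XY : X <= Y.
  rewrite /X /Y leq_exp2r; last by lia.
  rewrite /M /N leq_mul2r; apply/orP; right.
  clear -k2; nia.
have h1' : 4 * ((k + k) * V) <= T0 + n * X.
  apply: (@cancel_l (k + k)); first lia.
  apply: leq_trans _ h1; apply: eq_leq; rewrite /M.
  have E : forall a : nat, (k + k) * (4 * ((k + k) * a)) = 16 * k ^ 2 * a.
    by move=> a; clear; nia.
  by rewrite E.
have h2' : 4 * ((k + k) * Cc) <= T0 + n * Y.
  apply: leq_trans _ h2; apply: eq_leq; rewrite /N.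
  have E : forall a : nat, 4 * ((k + k) * a) = 8 * k * a.
    by move=> a; clear; nia.
  by rewrite E.
have nXY : n * X <= n * Y by rewrite leq_mul2l XY orbT.
have fin : T0 <= n * Y.
  clear -h3 h1' h2' nXY; lia.
have Yeq : Y = 64 ^ k * k ^ (3 * k) * D ^ k.
  rewrite /Y /N (_ : k * (8 * k) ^ 2 * D = 64 * k ^ 3 * D); last by clear; nia.
  by rewrite expnM -!expnMn.
have e2 : 64 ^ k <= 64 ^ (k + k) by rewrite leq_pexp2l // leq_addr.
have fin2 : n * Y <= 64 ^ (k + k) * k ^ (3 * k) * n * D ^ k.
  have E : forall a a' b d nn : nat, a <= a' -> nn * (a * b * d) <= a' * b * nn * d.
    move=> a a' b d nn h.
    have := leq_mul (leq_mul (leq_mul h (leqnn b)) (leqnn nn)) (leqnn d).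
    apply: leq_trans; apply: eq_leq; lia.
  by rewrite Yeq; apply: E.
move: hyp; rewrite -/T0 -/D -/n => hyp.
clear -hyp fin fin2; lia.
Qed.
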